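(* Let $X$ be an infinite set with the discrete topology and let $G$ be a subgroup of the permutation group $\mathrm S(X)$ endowed with the permutation topology $\tau_\partial$. Then the Roelcke uniformity $L\wedge R$ of $G$ coincides with the uniformity $R_{\mathcal K}$, whose base consists of the coverings $\{O g\,\mathrm{St}_{x_1,\dots,x_n}\mid g\in G\}$ with $O$ a neighbourhood of the identity of $G$ and $x_1,\dots,x_n\in X$, $n\in\mathbb N$.
   Context: The permutation topology $\tau_\partial$ on $G$ is the group topology in which the pointwise stabilizers $\mathrm{St}_{x_1,\dots,x_n}=\{g\in G\mid g(x_i)=x_i\}$, $x_1,\dots,x_n\in X$, form a base of neighbourhoods of the identity. The Roelcke uniformity $L\wedge R$ is the greatest lower bound of the left and right uniformities; its base consists of the coverings $\{UgU\mid g\in G\}$, $U$ a neighbourhood of the identity. *)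

(* Defs.v *)
(* permutations of a type X are represented as bijective
   functions X -> X; subsets are predicates. *)
From Stdlib Require Import List.

Section Defs.
Variable X : Type.

Definition bijective (f : X -> X) : Prop :=
  exists h : X -> X, (forall x, h (f x) = x) /\ (forall x, f (h x) = x).

Definition is_perm_subgroup (G : (X -> X) -> Prop) : Prop :=
  (forall g, G g -> bijective g) /\
  G (fun x => x) /\
  (forall g h, G g -> G h -> G (fun x => g (h x))) /\
  (forall g, G g -> exists h, G h /\ (forall x, h (g x) = x) /\ (forall x, g (h x) = x)).

Definition St (G : (X -> X) -> Prop) (F : list X) : (X -> X) -> Prop :=
  fun g => G g /\ forall x, In x F -> g x = x.

Definition nbhd1 (G : (X -> X) -> Prop) (U : (X -> X) -> Prop) : Prop :=
  (forall g, U g -> G g) /\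
  exists F : list X, forall g, St G F g -> U g.

Definition dprod (A : (X -> X) -> Prop) (g : X -> X) (B : (X -> X) -> Prop)
  : (X -> X) -> Prop :=
  fun f => exists a b, A a /\ B b /\ f = (fun x => a (g (b x))).

Definition cover := ((X -> X) -> Prop) -> Prop.

Definition refines (C1 C2 : cover) : Prop :=
  forall S, C1 S -> exists T, C2 T /\ forall f, S f -> T f.

Definition roelcke_base (G : (X -> X) -> Prop) : cover -> Prop :=
  fun C => exists U, nbhd1 G U /\
    C = (fun S => exists g, G g /\ S = dprod U g U).

Definition RK_base (G : (X -> X) -> Prop) : cover -> Prop :=
  fun C => exists O F, nbhd1 G O /\
    C = (fun S => exists g, G g /\ S = dprod O g (St G F)).

(* Two bases of coverings generate the same uniformity iff every base
   covering of each is refined by some base covering of the other. *)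
Definition same_uniformity (B1 B2 : cover -> Prop) : Prop :=
  (forall C1, B1 C1 -> exists C2, B2 C2 /\ refines C2 C1) /\
  (forall C2, B2 C2 -> exists C1, B1 C1 /\ refines C1 C2).

End Defs.

(* Main.v *)
Require Import Defs.
From Stdlib Require Import List.

Theorem proposition3p0 (X : Type)
  (Xinf : ~ exists l : list X, forall x : X, In x l)
  (G : (X -> X) -> Prop) (HG : is_perm_subgroup X G) :
  same_uniformity X (roelcke_base X G) (RK_base X G).
Proof.
  split.
  - intros C1 [U [[HUG [F HF]] HC]]. subst C1.
    exists (fun S => exists g, G g /\ S = dprod X (St X G F) g (St X G F)).
    split.
    + exists (St X G F), F. split; [|reflexivity].
      split; [intros g [Hg _]; exact Hg| exists F; auto].
    + intros S [g [Hg HS]]. subst S.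
      exists (dprod X U g U). split; [exists g; auto|].
      intros f [a [b [Ha [Hb Hf]]]]. exists a, b. auto.
  - intros C2 [O [F [[HOG [F0 HF0]] HC]]]. subst C2.
    set (U := fun g => O g /\ St X G F g).
    exists (fun S => exists g, G g /\ S = dprod X U g U).
    split.
    + exists U. split; [|reflexivity].
      split; [intros g [Hg _]; auto|].
      exists (F0 ++ F). intros g [Hg Hfix]. split.
      * apply HF0. split; auto. intros x Hx. apply Hfix, in_or_app; auto.
      * split; auto. intros x Hx. apply Hfix, in_or_app; auto.
    + intros S [g [Hg HS]]. subst S.
      exists (dprod X O g (St X G F)). split; [exists g; auto|].
      intros f [a [b [[Ha _] [[_ Hb] Hf]]]]. exists a, b. auto.
Qed.
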